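(* Let $\textup{Sav}_{312}(z)=\sum_{n\ge0}\textup{Sav}_n(312)z^n$ (with $\textup{Sav}_0(312)=1$). Then \[\textup{Sav}_{312}(z)=\frac{-z^3+z^2+z-1}{z^4-2z^3+z^2+2z-1}.\] In particular, $\textup{Sav}_{312}(z)=1/(1-B(z))$ where $B(z)=z+\sum_{n\ge2}\lfloor n/2\rfloor z^n=\frac{z^4-z^3+z}{(z-1)^2(z+1)}$ is the generating function of strongly 312-avoiding permutations ending in the entry $1$.
   Context: Permutations are written in one-line notation $p=p_1\cdots p_n$ with $p_i=p(i)$. $p$ contains a pattern $q=q_1\cdots q_m$ if there are indices $i_1<\cdots<i_m$ with $p_{i_r}<p_{i_s}$ iff $q_r<q_s$; otherwise $p$ avoids $q$. $p^2(i)=p(p(i))$. A permutation $p$ is strongly $q$-avoiding if both $p$ and $p^2$ avoid $q$, and $\textup{Sav}_n(q)$ is the number of strongly $q$-avoiding permutations of length $n$. *)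

(* Defs.v *)
From HB Require Import structures.
From mathcomp Require Import all_boot all_order all_algebra all_fingroup.
Set Implicit Arguments. Unset Strict Implicit. Unset Printing Implicit Defensive.
Import Order.TTheory GRing.Theory Num.Theory.

Definition contains (n : nat) (w : 'I_n -> nat) (q : seq nat) : bool :=
  [exists f : {ffun 'I_(size q) -> 'I_n},
    [forall r : 'I_(size q), forall s : 'I_(size q),
       ((r < s)%N ==> (f r < f s)%N) &&
       ((w (f r) < w (f s))%N == (nth 0%N q r < nth 0%N q s)%N)]].

Definition avoids (n : nat) (w : 'I_n -> nat) (q : seq nat) : bool :=
  ~~ contains w q.

(* One-line notation of p : values p(i); we use 0-based values, which
   does not affect relative order. p^2 = p * p, so (p*p) i = p (p i). *)
Definition oneline (n : nat) (p : {perm 'I_n}) : 'I_n -> nat :=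
  fun i => val (p i).

Definition strongly_avoids (n : nat) (p : {perm 'I_n}) (q : seq nat) : bool :=
  avoids (oneline p) q && avoids (oneline (p * p)%g) q.

Definition p312 : seq nat := [:: 3; 1; 2]%N.

(* Sav_n(312); for n = 0 the unique empty permutation is counted, so Sav_0 = 1. *)
Definition Sav312 (n : nat) : nat :=
  #|[set p : {perm 'I_n} | strongly_avoids p p312]|.

(* Number of strongly 312-avoiding permutations of length n+1 ending in
   the entry 1 (0-based: last value is 0). *)
Definition Sav312_end1 (n : nat) : nat :=
  #|[set p : {perm 'I_n.+1} | strongly_avoids p p312 && (p ord_max == ord0)]|.

(* Formal power series over int as coefficient functions nat -> int. *)
Definition conv (a b : nat -> int) (n : nat) : int :=
  (\sum_(i < n.+1) a i * b (n - i)%N)%R.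

Definition poly_coefs (s : seq int) : nat -> int := fun n => nth 0%R s n.

Definition SavGF (n : nat) : int := Posz (Sav312 n).

Definition Bcoef (n : nat) : int :=
  if n == 0%N then 0%R else if n == 1%N then 1%R else Posz n./2.

Definition oneMinusB (n : nat) : int := (Posz (n == 0%N) - Bcoef n)%R.

(* Main.v *)
Require Import Defs.
From mathcomp Require Import all_boot all_order all_algebra all_fingroup.
From mathcomp Require Import zify ring.
Import Order.TTheory GRing.Theory Num.Theory.
Set Implicit Arguments. Unset Strict Implicit. Unset Printing Implicit Defensive.

Definition tri (n:nat) (w : 'I_n -> nat) : bool :=
  [exists i : 'I_n, exists j : 'I_n, exists k : 'I_n,
     [&& (i < j)%N, (j < k)%N, (w j < w k)%N & (w k < w i)%N]].

Lemma containsE n (w : 'I_n -> nat) : contains w p312 = tri w.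
Proof.
apply/idP/idP.
- case/existsP => f /forallP H.
  have H' r s := forallP (H r) s.
  pose r0 : 'I_3 := @Ordinal 3 0 isT.
  pose r1 : 'I_3 := @Ordinal 3 1 isT.
  pose r2 : 'I_3 := @Ordinal 3 2 isT.
  have /andP[/= h01 /eqP e01] := H' r0 r1.
  have /andP[/= h12 /eqP e12] := H' r1 r2.
  have /andP[/= h20 /eqP e20] := H' r2 r0.
  apply/existsP; exists (f r0); apply/existsP; exists (f r1); apply/existsP; exists (f r2).
  by rewrite h01 h12 e12 e20.
- case/existsP => i /existsP [j /existsP [k /and4P [hij hjk h1 h2]]].
  apply/existsP; exists [ffun r : 'I_3 => nth i [:: i; j; k] r].
  apply/forallP => r; apply/forallP => s; rewrite !ffunE.
  case: r => [[|[|[|r]]] Hr] //; case: s => [[|[|[|s]]] Hs] //=; try (apply/andP; split);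
   (try apply/implyP); (try apply/eqP); lia.
Qed.

Lemma valE n (x : 'I_n) : val x = nat_of_ord x.
Proof. by []. Qed.

Definition famf n j (x : 'I_n.+1) : 'I_n.+1 :=
  inord (if (x < j)%N then n.+1 - j + x else n - x)%N.
Arguments famf : clear implicits.

Lemma famfE n j (x : 'I_n.+1) :
  nat_of_ord (famf n j x) = (if (x < j)%N then n.+1 - j + x else n - x)%N.
Proof. rewrite /famf inordK //; have := ltn_ord x; case: ifP; lia. Qed.

Lemma famf_inj n j : injective (famf n j).
Proof.
move=> x y /(congr1 (@nat_of_ord _)); rewrite !famfE => h; apply/val_inj.
have := ltn_ord x; have := ltn_ord y; move: h; case: ifP; case: ifP => /=; lia.
Qed.

Definition fam n j : {perm 'I_n.+1} := perm (@famf_inj n j).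

Lemma famE n j x : nat_of_ord (fam n j x) = (if (x < j)%N then n.+1 - j + x else n - x)%N.
Proof. by rewrite permE famfE. Qed.

Lemma fam2E n j x : (1 <= j)%N -> (j + j <= n.+1)%N ->
  nat_of_ord ((fam n j * fam n j)%g x) =
  (if (x < j)%N then j.-1 - x else if (x < n.+1 - j)%N then nat_of_ord x else n.+1 - j + n - x)%N.
Proof.
move=> h1 h2; rewrite permM famE famE; have := ltn_ord x.
case: (ltnP x j) => h3; case: (ltnP x (n.+1 - j)) => h4; case: ifP; lia.
Qed.

Lemma fam_good n j : (1 <= j)%N -> (j + j <= n.+1)%N ->
  ~~ tri (oneline (fam n j)) && ~~ tri (oneline (fam n j * fam n j)%g).
Proof.
move=> h1 h2; apply/andP; split; apply/negP;
  case/existsP => i /existsP [j' /existsP [k /and4P [h3 h4 h5 h6]]];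
  move: h5 h6; rewrite /oneline /=.
- rewrite !famE; have := ltn_ord i; have := ltn_ord j'; have := ltn_ord k.
  by do ! case: ifP; move=> *; lia.
- rewrite !fam2E //; have := ltn_ord i; have := ltn_ord j'; have := ltn_ord k.
  by do ! case: ifP; move=> *; lia.
Qed.

Lemma noT n (w : 'I_n -> nat) : ~~ tri w ->
  forall i j k : 'I_n, (i < j)%N -> (j < k)%N -> (w j < w k)%N -> (w k < w i)%N -> False.
Proof.
move=> /negP H i j k h1 h2 h3 h4; apply: H; apply/existsP; exists i; apply/existsP; exists j.
by apply/existsP; exists k; rewrite h1 h2 h3 h4.
Qed.

Lemma card_lt N c : (c <= N)%N -> #|[set x : 'I_N | (x < c)%N]| = c.
Proof.
elim: c => [|c IH] h.
  by apply/eqP; rewrite cards_eq0; apply/eqP/setP => x; rewrite !inE.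
rewrite (_ : [set x : 'I_N | (x < c.+1)%N] = Ordinal h |: [set x : 'I_N | (x < c)%N]).
  by rewrite cardsU1 inE /= ltnn IH // ltnW.
by apply/setP => x; rewrite !inE ltnS leq_eqVlt -val_eqE.
Qed.

Lemma card_pre N (p : {perm 'I_N}) c : (c <= N)%N -> #|[set x | (nat_of_ord (p x) < c)%N]| = c.
Proof.
move=> h; rewrite -{2}(card_lt h) -[in RHS](card_preimset _ (@perm_inj _ p)).
by apply: eq_card => x; rewrite !inE.
Qed.

Lemma necess n (p : {perm 'I_n.+2}) :
  ~~ tri (oneline p) -> ~~ tri (oneline (p * p)%g) -> p ord_max = ord0 ->
  exists j, [/\ (1 <= j)%N, (j + j <= n.+2)%N & p = fam n.+1 j].
Proof.
move=> Hp Hg Hmax.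
have Tp : forall i j k : 'I_n.+2, (i < j)%N -> (j < k)%N ->
    (nat_of_ord (p j) < nat_of_ord (p k))%N -> (nat_of_ord (p k) < nat_of_ord (p i))%N -> False.
  by move=> i j k h1 h2 h3 h4; apply: (noT Hp h1 h2).
have Tg : forall i j k : 'I_n.+2, (i < j)%N -> (j < k)%N ->
    (nat_of_ord (p (p j)) < nat_of_ord (p (p k)))%N -> (nat_of_ord (p (p k)) < nat_of_ord (p (p i)))%N -> False.
  by move=> i j k h1 h2 h3 h4; apply: (noT Hg h1 h2); rewrite /oneline !permM.
set a := nat_of_ord (p ord0).
have a1 : (0 < a)%N.
  rewrite lt0n; apply/negP => /eqP h0.
  have : p ord0 = p ord_max by apply: ord_inj; rewrite Hmax -/a h0.
  by move/perm_inj/(congr1 val).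
have aN : (a < n.+2)%N := ltn_ord _.
have gmax : p (p ord_max) = p ord0 by rewrite Hmax.
have S1 : forall x : 'I_n.+2, (x < a)%N -> (nat_of_ord (p (p x)) < a)%N.
  have cX : #|[set x | (nat_of_ord ((p * p)%g x) < a)%N]| = a := card_pre (p * p) (ltnW aN).
  have sub : [set x | (nat_of_ord ((p * p)%g x) < a)%N] \subset [set x : 'I_n.+2 | (x < a)%N].
    apply/subsetP => x; rewrite !inE permM => hx; rewrite ltnNge; apply/negP => hax.
    have xmax : (x < n.+1)%N.
      have : x != ord_max by apply/eqP => e; move: hx; rewrite e gmax -/a ltnn.
      rewrite -val_eqE /= => ne; have := ltn_ord x; lia.
    have : [set y : 'I_n.+2 | (y < x.+1)%N] \subset [set x | (nat_of_ord ((p * p)%g x) < a)%N].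
      apply/subsetP => y; rewrite !inE permM => hy.
      rewrite ltnNge; apply/negP => hya.
      have ne : (y : nat) != x.
        apply/eqP => e; have e' : y = x by apply: ord_inj.
        by move: hx; rewrite -e'; lia.
      have hyx : (y < x)%N by lia.
      have ga : nat_of_ord (p (p y)) != a.
        apply/eqP => e; have : p (p y) = p (p ord_max) by apply: ord_inj; rewrite e gmax.
        move/perm_inj/perm_inj => e2; move: hyx xmax; rewrite e2 /=; lia.
      apply: (Tg y x ord_max) => //=; rewrite ?gmax -/a; lia.
    move/subset_leq_card; rewrite card_lt ?cX //; lia.
  move=> x hx.
  have : [set x | (nat_of_ord ((p * p)%g x) < a)%N] == [set x : 'I_n.+2 | (x < a)%N].
    by rewrite eqEcard sub /= cX card_lt // ltnW.
  by move/eqP/setP/(_ x); rewrite !inE permM hx => ->.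
have S2 : forall y : 'I_n.+2, (nat_of_ord (p y) < a)%N -> (nat_of_ord ((p^-1)%g y) < a)%N.
  have sub : p @: [set x : 'I_n.+2 | (x < a)%N] \subset [set y | (nat_of_ord (p y) < a)%N].
    by apply/subsetP => y /imsetP [x hx ->]; rewrite inE; apply: S1; rewrite inE in hx.
  have E : p @: [set x : 'I_n.+2 | (x < a)%N] = [set y | (nat_of_ord (p y) < a)%N].
    apply/eqP; rewrite eqEcard sub /= card_pre; last exact: ltnW.
    rewrite card_imset; last exact: perm_inj.
    by rewrite card_lt // ltnW.
  move=> y hy; have : y \in p @: [set x : 'I_n.+2 | (x < a)%N] by rewrite E inE.
  by case/imsetP => x hx ->; rewrite permK; rewrite inE in hx.
set K := (p^-1)%g ord_max.
have hK : (nat_of_ord K < a)%N by apply: S2; rewrite Hmax.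
have hA : (nat_of_ord (p (p ord0)) < a)%N := S1 ord0 a1.
have Si : forall x : 'I_n.+2, (a <= x)%N -> (nat_of_ord (p x) < a)%N.
  move=> x hax; rewrite ltnNge; apply/negP => hpx.
  have xa : (a < x)%N.
    have : (nat_of_ord x != a).
      apply/eqP => e; have ex : x = p ord0 by apply: ord_inj.
      by move: hpx; rewrite ex; lia.
    lia.
  have pxmax : (nat_of_ord (p x) < n.+1)%N.
    have : p x != ord_max.
      apply/eqP => e; have : x = K by rewrite /K -e permK.
      by move=> e2; move: hK; rewrite -e2; lia.
    rewrite -val_eqE /= => ne; have := ltn_ord (p x); lia.
  apply: (Tp K (p ord0) x) => //; rewrite ?permKV //= -/a; lia.
have Ssep : forall x y : 'I_n.+2, (a <= p x)%N -> (p y < a)%N -> (x < y)%N.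
  move=> x y hx hy; rewrite ltnNge; apply/negP => hyx.
  have xa : (x < a)%N by rewrite ltnNge; apply/negP => h; have := Si x h; lia.
  set z := (p^-1)%g x; have pz : p z = x by rewrite permKV.
  have za : (a <= z)%N by rewrite leqNgt; apply/negP => h; have := S1 z h; rewrite pz; lia.
  set u := (p^-1)%g y; have pu : p u = y by rewrite permKV.
  have ua : (u < a)%N by apply: S2.
  have ne : (y : nat) != x.
    apply/eqP => e; have e2 : y = x by apply: ord_inj.
    move: hx hy; rewrite e2; lia.
  have yx : (y < x)%N by lia.
  have u0 : (0 < u)%N.
    rewrite lt0n; apply/eqP => e; have e' : u = ord0 by apply: ord_inj.
    by move: pu; rewrite e' => e2; move: yx xa; rewrite -e2 -/a; lia.
  have uz : (u < z)%N by lia.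
  have : (p z < p u)%N.
    rewrite ltnNge; apply/negP => h.
    have ne2 : (p u : nat) != p z.
      apply/eqP => e; have e2 : u = z by apply: (@perm_inj _ p); exact: ord_inj.
      by move: uz; rewrite e2 ltnn.
    apply: (Tp ord0 u z) => //; rewrite ?pz ?pu -/a; lia.
  rewrite pz pu; lia.
pose j := (n.+2 - a)%N.
have SC : forall x : 'I_n.+2, (a <= p x)%N = (x < j)%N.
  pose C := [set x : 'I_n.+2 | (a <= p x)%N].
  have cC : #|C| = j.
    have e : C = ~: [set x | (nat_of_ord (p x) < a)%N] by apply/setP => x; rewrite !inE -leqNgt.
    have := cardsC [set x | (nat_of_ord (p x) < a)%N].
    rewrite card_ord card_pre -?e; [set c := #|C|; rewrite /j; lia | exact: ltnW].
  have sub : C \subset [set x : 'I_n.+2 | (x < j)%N].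
    apply/subsetP => x; rewrite !inE => hx; rewrite ltnNge; apply/negP => hjx.
    have : [set y : 'I_n.+2 | (y < x.+1)%N] \subset C.
      apply/subsetP => y; rewrite !inE => hy; rewrite leqNgt; apply/negP => h.
      have := Ssep x y hx h; lia.
    move/subset_leq_card; rewrite card_lt ?cC //; lia.
  have E : C = [set x : 'I_n.+2 | (x < j)%N].
    apply/eqP; rewrite eqEcard sub cC card_lt //; lia.
  move=> x; have : (x \in C) = (x \in [set x : 'I_n.+2 | (x < j)%N]) by rewrite E.
  by rewrite !inE.
have aE : nat_of_ord (p ord0) = a by [].
have jpos : (0 < j)%N by rewrite /j; lia.
have ja : (j <= a)%N.
  have := SC (p ord0); rewrite aE => e.
  case: (ltnP a j) => h //; move: e hA; rewrite h; lia.
have SS : forall x : 'I_n.+2, (p x < a)%N = (j <= x)%N.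
  by move=> x; rewrite ltnNge SC -leqNgt.
have dec : forall x y : 'I_n.+2, (j <= x)%N -> (x < y)%N -> (p y < p x)%N.
  move=> x y hx hxy.
  have hpx : (p x < a)%N by rewrite SS.
  have hpy : (p y < a)%N by rewrite SS; lia.
  rewrite ltnNge; apply/negP => h.
  have ne : (p x : nat) != p y.
    apply/eqP => e; have e2 : x = y by apply: (@perm_inj _ p); exact: ord_inj.
    by move: hxy; rewrite e2 ltnn.
  apply: (Tp ord0 x y); rewrite /= ?aE; lia.
have inc : forall x y : 'I_n.+2, (x < y)%N -> (y < j)%N -> (p x < p y)%N.
  move=> x y hxy hyj.
  have hpy : (a <= p y)%N by rewrite SC.
  have hpx : (a <= p x)%N by rewrite SC; lia.
  have ay : (a < p y)%N.
    have : (p y : nat) != a.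
      apply/eqP => e; have e2 : y = ord0 by apply: (@perm_inj _ p); exact: ord_inj.
      by move: hxy; rewrite e2.
    lia.
  case: (posnP x) => [x0|x0].
    have -> : x = ord0 by apply: ord_inj.
    by rewrite aE.
  rewrite ltnNge; apply/negP => h.
  have ne : (p x : nat) != p y.
    apply/eqP => e; have e2 : x = y by apply: (@perm_inj _ p); exact: ord_inj.
    by move: hxy; rewrite e2 ltnn.
  have ayx : (p y < p x)%N by lia.
  have d1 : (p (p x) < p (p y))%N by apply: dec => //; lia.
  have d2 : (p (p y) < p (p ord0))%N by apply: dec; rewrite ?aE; lia.
  exact: (Tg ord0 x y x0 hxy d1 d2).
pose F i := nat_of_ord (p (inord i)).
have Fv : forall x : 'I_n.+2, F x = p x by move=> x; rewrite /F inord_val.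
have decF : forall i, (j <= i)%N -> (i.+1 < n.+2)%N -> (F i.+1 < F i)%N.
  by move=> i h1 h2; rewrite /F; apply: dec; rewrite !inordK; lia.
have incF : forall i, (i.+1 < j)%N -> (F i < F i.+1)%N.
  by move=> i h1; rewrite /F; apply: inc; rewrite !inordK; lia.
have F0 : F 0 = a.
  by rewrite /F (_ : inord 0 = ord0) //; apply: ord_inj; rewrite inordK.
have Fj : (F j < a)%N by rewrite /F SS inordK; lia.
have Fb : forall i, (F i < n.+2)%N by move=> i; exact: ltn_ord.
have L1 : forall d i, (i + d = n.+1)%N -> (j <= i)%N -> (d <= F i)%N.
  elim => [|d IH] i h1 h2 //.
  have h3 := IH i.+1 ltac:(lia) ltac:(lia).
  have h4 := decF i h2 ltac:(lia). lia.
have U1 : forall d, (j + d < n.+2)%N -> (F (j + d) + d < a)%N.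
  elim => [|d IH] h; first by rewrite !addn0.
  have h3 := IH ltac:(lia).
  have h4 := decF (j + d) ltac:(lia) ltac:(lia). rewrite (addnS j d); lia.
have L2 : forall d, (d < j)%N -> (a + d <= F d)%N.
  elim => [|d IH] h; first by rewrite F0 addn0.
  have h3 := IH ltac:(lia). have h4 := incF d h. lia.
have U2 : forall d i, (i + d = j.-1)%N -> (F i + d < n.+2)%N.
  elim => [|d IH] i h; first by rewrite addn0.
  have h3 := IH i.+1 ltac:(lia). have h4 := incF i ltac:(lia). lia.
exists j; split; [lia | lia |].
apply/permP => x; apply: ord_inj; rewrite famE -Fv.
have hx := ltn_ord x.
case: ifP => h.
  have h1 := L2 x h. have h2 := U2 (j.-1 - x)%N x ltac:(lia). rewrite /j; lia.
have h1 := L1 (n.+1 - x)%N x ltac:(lia) ltac:(lia).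
have h2 := U1 (x - j)%N ltac:(lia).
rewrite subnKC in h2; last by lia.
rewrite /j in h2 *; lia.
Qed.

Lemma saE n (p : {perm 'I_n}) :
  strongly_avoids p p312 = ~~ tri (oneline p) && ~~ tri (oneline (p * p)%g).
Proof. by rewrite /strongly_avoids /avoids !containsE. Qed.

Lemma tri_small n (w : 'I_n -> nat) : (n <= 2)%N -> ~~ tri w.
Proof.
move=> hn; apply/negP => /existsP [i /existsP [j /existsP [k /and4P [h1 h2 _ _]]]].
have := ltn_ord k; lia.
Qed.

Lemma perm_small n (p : {perm 'I_n}) : (n <= 1)%N -> p = 1%g.
Proof.
move=> hn; apply/permP => x; apply: ord_inj; rewrite perm1.
have := ltn_ord x; have := ltn_ord (p x); lia.
Qed.

Lemma Sav0 : Sav312 0 = 1%N.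
Proof.
rewrite /Sav312; transitivity #|[set (1%g : {perm 'I_0})]|; last by rewrite cards1.
apply: eq_card => p.
by rewrite !inE saE !tri_small // (perm_small p) // eqxx.
Qed.

Lemma end1_count n : Sav312_end1 n = (if n == 0 then 1 else (n.+1)./2)%N.
Proof.
case: n => [|m].
  rewrite /Sav312_end1; transitivity #|[set (1%g : {perm 'I_1})]|; last by rewrite cards1.
  apply: eq_card => p.
  rewrite !inE saE !tri_small // (perm_small p) // !eqxx perm1 /=.
  by apply/eqP; apply: ord_inj.
rewrite /Sav312_end1 /=.
have -> : [set p : {perm 'I_m.+2} | strongly_avoids p p312 && (p ord_max == ord0)]
        = [set fam m.+1 (nat_of_ord j).+1 | j : 'I_((m.+2)./2)].
  apply/setP => p; rewrite !inE saE; apply/idP/idP.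
  - case/andP => /andP [h1 h2] /eqP h3.
    have [j [hj1 hj2 ->]] := necess h1 h2 h3.
    have hj : (j.-1 < (m.+2)./2)%N by lia.
    apply/imsetP; exists (Ordinal hj) => //=.
    by rewrite prednK.
  - case/imsetP => j _ ->.
    have hj := ltn_ord j; rewrite gtn_half_double in hj.
    move: (nat_of_ord j) hj => jj hj.
    apply/andP; split; first by apply: fam_good; lia.
    apply/eqP; apply: ord_inj; rewrite famE /=.
    case: ifP; lia.
rewrite card_imset ?card_ord //.
move=> i j /permP /(_ ord0) /(congr1 (@nat_of_ord _)); rewrite !famE => e.
apply: ord_inj; move: e (ltn_ord i) (ltn_ord j); rewrite !gtn_half_double.
move: (nat_of_ord i) (nat_of_ord j) => ii jj /=; lia.
Qed.

Section Psum.
Variables (k m : nat).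

Definition psf (s : {perm 'I_k}) (t : {perm 'I_m}) (x : 'I_(k + m)) : 'I_(k + m) :=
  match split x with inl a => lshift m (s a) | inr b => rshift k (t b) end.

Lemma psf_inj s t : injective (psf s t).
Proof.
move=> x y; rewrite /psf.
rewrite -{2}(splitK x) -{2}(splitK y).
case: (split x) => [a|b]; case: (split y) => [a'|b'] /= /(congr1 (@nat_of_ord _)) /= e.
- by have -> : a = a' by apply: (@perm_inj _ s); apply: ord_inj.
- by have := ltn_ord (s a); lia.
- by have := ltn_ord (s a'); lia.
- have -> : b = b' by apply: (@perm_inj _ t); apply: ord_inj; lia.
  by [].
Qed.

Definition psum s t : {perm 'I_(k + m)} := perm (@psf_inj s t).

Lemma psumL s t a : psum s t (lshift m a) = lshift m (s a).
Proof. by rewrite permE /psf (unsplitK (inl a)). Qed.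

Lemma psumR s t b : psum s t (rshift k b) = rshift k (t b).
Proof. by rewrite permE /psf (unsplitK (inr b)). Qed.

Lemma ordsumP (x : 'I_(k + m)) : (exists a, x = lshift m a) \/ (exists b, x = rshift k b).
Proof. by rewrite -(splitK x); case: (split x) => [a|b]; [left|right]; eexists. Qed.

Lemma psumM s t s' t' : (psum s t * psum s' t')%g = psum (s * s')%g (t * t')%g.
Proof.
apply/permP => x; case: (ordsumP x) => [[a ->]|[b ->]];
  by rewrite permM ?psumL ?psumR ?permM.
Qed.

Lemma tri_psum s t : tri (oneline (psum s t)) = tri (oneline s) || tri (oneline t).
Proof.
rewrite /oneline; apply/idP/idP.
- case/existsP => i /existsP [j /existsP [l /and4P []]].
  case: (ordsumP i) => [[a ->]|[a ->]]; case: (ordsumP j) => [[b ->]|[b ->]];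
  case: (ordsumP l) => [[c ->]|[c ->]]; rewrite ?psumL ?psumR /= => h1 h2 h3 h4.
  + apply/orP; left; apply/existsP; exists a; apply/existsP; exists b.
    by apply/existsP; exists c; apply/and4P; split.
  + by have := ltn_ord (s a); lia.
  + by have := ltn_ord c; lia.
  + by have := ltn_ord (s a); lia.
  + by have := ltn_ord b; lia.
  + by have := ltn_ord b; lia.
  + by have := ltn_ord c; lia.
  + apply/orP; right; apply/existsP; exists a; apply/existsP; exists b.
    apply/existsP; exists c; apply/and4P; split; lia.
- case/orP => /existsP [i /existsP [j /existsP [l /and4P [h1 h2 h3 h4]]]].
  + apply/existsP; exists (lshift m i); apply/existsP; exists (lshift m j).
    by apply/existsP; exists (lshift m l); rewrite !psumL /=; apply/and4P; split.
  + apply/existsP; exists (rshift k i); apply/existsP; exists (rshift k j).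
    move: h3 h4; rewrite !valE => h3 h4.
    apply/existsP; exists (rshift k l); rewrite !psumR /=; apply/and4P; split; lia.
Qed.

Lemma sa_psum s t : strongly_avoids (psum s t) p312 = strongly_avoids s p312 && strongly_avoids t p312.
Proof.
rewrite !saE psumM !tri_psum !negb_or.
by case: (tri (oneline s)); case: (tri (oneline t)); case: (tri _); case: (tri _).
Qed.

End Psum.

Lemma card_ge N c : (c <= N)%N -> #|[set x : 'I_N | (c <= x)%N]| = (N - c)%N.
Proof.
move=> h; have e : [set x : 'I_N | (c <= x)%N] = ~: [set x : 'I_N | (x < c)%N].
  by apply/setP => x; rewrite !inE -leqNgt.
rewrite e; have := cardsC [set x : 'I_N | (x < c)%N]; rewrite card_ord card_lt //; lia.
Qed.

Lemma card_pre_ge N (p : {perm 'I_N}) c : (c <= N)%N ->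
  #|[set x | (c <= nat_of_ord (p x))%N]| = (N - c)%N.
Proof.
move=> h; have e : [set x | (c <= nat_of_ord (p x))%N] = ~: [set x | (nat_of_ord (p x) < c)%N].
  by apply/setP => x; rewrite !inE -leqNgt.
rewrite e; have := cardsC [set x | (nat_of_ord (p x) < c)%N]; rewrite card_ord card_pre //; lia.
Qed.

Lemma cnt_block k m :
  #|[set p : {perm 'I_(k.+1 + m)} | strongly_avoids p p312 &&
        (nat_of_ord (p (lshift m (@ord_max k))) == 0%N)]| = (Sav312_end1 k * Sav312 m)%N.
Proof.
rewrite /Sav312_end1 /Sav312 -cardsX.
have inj : injective (fun st : {perm 'I_k.+1} * {perm 'I_m} => psum st.1 st.2).
  move=> [s t] [s' t'] /= e; congr (_, _); apply/permP => x.
    have h := congr1 (fun q : {perm 'I_(k.+1 + m)} => q (lshift m x)) e.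
    by rewrite /= !psumL in h; exact: (lshift_inj h).
  have h := congr1 (fun q : {perm 'I_(k.+1 + m)} => q (rshift k.+1 x)) e.
  by rewrite /= !psumR in h; exact: (rshift_inj h).
rewrite -(card_imset _ inj); apply: eq_card => p; rewrite inE; apply/idP/imsetP.
- case/andP => hsa /eqP hp0.
  have hsa' := hsa; rewrite saE in hsa'; case/andP: hsa' => Hp _.
  have Tp : forall i j l : 'I_(k.+1 + m), (i < j)%N -> (j < l)%N ->
      (nat_of_ord (p j) < nat_of_ord (p l))%N -> (nat_of_ord (p l) < nat_of_ord (p i))%N -> False.
    by move=> i j l h1 h2 h3 h4; apply: (noT Hp h1 h2).
  set c := lshift m (@ord_max k).
  have vc : nat_of_ord c = k by [].
  have ne_c : forall y, y != c -> (0 < nat_of_ord (p y))%N.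
    move=> y hy; rewrite lt0n; apply/eqP => e.
    have : p y = p c by apply: ord_inj; rewrite e hp0.
    by move/perm_inj/eqP; rewrite (negbTE hy).
  have cA : forall x y : 'I_(k.+1 + m), (x < k)%N -> (k < y)%N -> (p x < p y)%N.
    move=> x y hx hy; rewrite ltnNge; apply/negP => h.
    have ne : (p x : nat) != p y.
      apply/eqP => e; have e2 : x = y by apply: (@perm_inj _ p); apply: ord_inj.
      by move: hx hy; rewrite e2; lia.
    have hy0 : (0 < nat_of_ord (p y))%N.
      by apply: ne_c; apply/negP => /eqP e; move: hy; rewrite e vc ltnn.
    apply: (Tp x c y); rewrite ?vc ?hp0; lia.
  have cL : forall x : 'I_(k.+1 + m), (x <= k)%N -> (p x < k.+1)%N.
    move=> x hx; rewrite ltnNge; apply/negP => hpx.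
    have xk : (x < k)%N.
      have : x != c by apply/eqP => e; move: hpx; rewrite e hp0.
      rewrite -val_eqE /= => ne; lia.
    have sub : x |: [set y : 'I_(k.+1 + m) | (k.+1 <= y)%N] \subset
               [set z | (k.+1 <= nat_of_ord (p z))%N].
      apply/subsetP => y; rewrite !inE => /orP [/eqP ->|hy] //.
      have := cA x y xk hy; lia.
    move/subset_leq_card: sub; rewrite cardsU1 card_pre_ge ?card_ge ?inE; try lia.
  have cR : forall y : 'I_(k.+1 + m), (k.+1 <= y)%N -> (k.+1 <= p y)%N.
    have E : [set z : 'I_(k.+1 + m) | (z < k.+1)%N] = [set z | (nat_of_ord (p z) < k.+1)%N].
      apply/eqP; rewrite eqEcard card_pre ?card_lt; try lia.
      rewrite leqnn andbT; apply/subsetP => z; rewrite !inE => hz; apply: cL; lia.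
    move=> y hy; rewrite leqNgt; apply/negP => h.
    have : y \in [set z | (nat_of_ord (p z) < k.+1)%N] by rewrite inE.
    by rewrite -E inE; lia.
  have hL : forall a : 'I_k.+1, (nat_of_ord (p (lshift m a)) < k.+1)%N.
    by move=> a; apply: cL => /=; have := ltn_ord a; lia.
  have hR : forall b : 'I_m, (nat_of_ord (p (rshift k.+1 b)) - k.+1 < m)%N.
    move=> b; have := ltn_ord (p (rshift k.+1 b)); have := cR (rshift k.+1 b) ltac:(by rewrite /=; lia).
    lia.
  pose sf := fun a : 'I_k.+1 => Ordinal (hL a).
  pose tf := fun b : 'I_m => Ordinal (hR b).
  have sf_inj : injective sf.
    move=> a a' /(congr1 (@nat_of_ord _)) /= e.
    have : p (lshift m a) = p (lshift m a') by apply: ord_inj.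
    by move/perm_inj/lshift_inj.
  have tf_inj : injective tf.
    move=> b b' /(congr1 (@nat_of_ord _)) /= e.
    have := cR (rshift k.+1 b) ltac:(by rewrite /=; lia).
    have := cR (rshift k.+1 b') ltac:(by rewrite /=; lia) => h1 h2.
    have : p (rshift k.+1 b) = p (rshift k.+1 b') by apply: ord_inj; lia.
    by move/perm_inj/rshift_inj.
  pose s := perm sf_inj; pose t := perm tf_inj.
  have pE : p = psum s t.
    apply/permP => x; case: (ordsumP x) => [[a ->]|[b ->]].
      by rewrite psumL; apply: ord_inj; rewrite /= permE.
    rewrite psumR; apply: ord_inj; rewrite /= permE /=.
    have := cR (rshift k.+1 b) ltac:(by rewrite /=; lia); lia.
  exists (s, t) => //.
  move: hsa; rewrite pE sa_psum !inE /= => /andP [-> ->] /=.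
  rewrite andbT; apply/eqP; apply: ord_inj; rewrite permE /=.
  by move: hp0; rewrite /c.
- case=> [[s t]]; rewrite !inE /= => /andP [/andP [hs /eqP hs0] ht] ->.
  by rewrite sa_psum hs ht psumL /= hs0.
Qed.

Definition G (N i : nat) : nat :=
  #|[set p : {perm 'I_N} | strongly_avoids p p312 &&
      [exists x : 'I_N, (nat_of_ord x == i) && (nat_of_ord (p x) == 0%N)]]|.

Lemma G_block k m : G (k.+1 + m) k = (Sav312_end1 k * Sav312 m)%N.
Proof.
rewrite -cnt_block /G; apply: eq_card => p; rewrite !inE; congr (_ && _).
apply/existsP/idP.
- case=> x /andP [/eqP hx hp].
  by have <- : x = lshift m (@ord_max k) by apply: ord_inj.
- by move=> h; exists (lshift m (@ord_max k)); rewrite /= eqxx.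
Qed.

Lemma Sav_G n : Sav312 n.+1 = (\sum_(i < n.+1) G n.+1 i)%N.
Proof.
rewrite /Sav312 -sum1dep_card (partition_big (fun p : {perm 'I_n.+1} => (p^-1)%g ord0) xpredT) //=.
apply: eq_bigr => i _; rewrite sum1dep_card /G; apply: eq_card => p; rewrite !inE.
congr (_ && _); apply/eqP/existsP.
- move=> <-; exists ((p^-1)%g ord0); rewrite eqxx permKV /=; done.
- case=> x /andP [/eqP hx /eqP hp].
  have -> : i = x by apply: ord_inj.
  have -> : ord0 = p x by apply: ord_inj; rewrite hp.
  by rewrite permK.
Qed.

Lemma Sav_rec n : Sav312 n.+1 = (\sum_(i < n.+1) Sav312_end1 i * Sav312 (n - i))%N.
Proof.
rewrite Sav_G; apply: eq_bigr => i _.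
move: (nat_of_ord i) (ltn_ord i) => i' hi.
have e : n.+1 = (i'.+1 + (n - i'))%N by lia.
by rewrite {1}e G_block.
Qed.

Local Open Scope ring_scope.

Lemma part3 n : Posz (Sav312_end1 n) = Bcoef n.+1.
Proof. by rewrite end1_count /Bcoef; case: n. Qed.

Lemma PoszS I (r : seq I) (P : pred I) (F : I -> nat) :
  Posz (\sum_(i <- r | P i) F i)%N = \sum_(i <- r | P i) Posz (F i).
Proof. exact: (big_morph Posz PoszD (erefl _)). Qed.

Lemma part2 n : conv oneMinusB SavGF n = Posz (n == 0%N).
Proof.
case: n => [|n].
  by rewrite /conv big_ord1 /oneMinusB /Bcoef /SavGF /= Sav0.
rewrite /conv big_ord_recl /=.
have -> : \sum_(i < n.+1) oneMinusB (bump 0 i) * SavGF (n.+1 - bump 0 i)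
     = - Posz (\sum_(i < n.+1) Sav312_end1 i * Sav312 (n - i))%N.
  rewrite PoszS -sumrN; apply: eq_bigr => i _.
  by rewrite /oneMinusB /bump /= add1n subSS -part3 /SavGF PoszM sub0r mulNr.
by rewrite /oneMinusB /Bcoef /= subr0 mul1r subn0 /SavGF Sav_rec subrr.
Qed.

Lemma part4 n : conv (poly_coefs [:: 1; -1; -1; 1]) Bcoef n = poly_coefs [:: 0; 1; 0; -1; 1] n.
Proof.
case: n => [|[|[|[|m]]]]; rewrite /conv.
- by rewrite big_ord1.
- by rewrite !big_ord_recl big_ord0 /=.
- by rewrite !big_ord_recl big_ord0 /=.
- by rewrite !big_ord_recl big_ord0 /=.
rewrite 4!big_ord_recl big1 => [|i _]; last first.
  by rewrite /poly_coefs nth_default ?mul0r.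
rewrite /= /poly_coefs /= /Bcoef /bump /=.
case: m => [|m] //=.
rewrite !uphalfE /= nth_nil; lia.
Qed.

Definition tp (N : nat) (a : nat -> int) : {poly int} := \poly_(i < N) a i.

Lemma conv_tp a b n N : (n < N)%N -> conv a b n = (tp N a * tp N b)`_n.
Proof.
move=> h; rewrite coefM /conv; apply: eq_bigr => i _.
have h1 : (i < N)%N by have := ltn_ord i; lia.
have h2 : (n - i < N)%N by lia.
by rewrite !coef_poly h1 h2.
Qed.

Definition eqto n (p q : {poly int}) := forall k, (k <= n)%N -> p`_k = q`_k.

Lemma eqto_mul n p p' q q' : eqto n p p' -> eqto n q q' -> eqto n (p * q) (p' * q').
Proof.
move=> hp hq k hk; rewrite !coefM; apply: eq_bigr => i _.
by rewrite hp ?hq //; have := ltn_ord i; lia.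
Qed.

Lemma part1 n :
  conv (poly_coefs [:: (-1)%R; 2%R; 1%R; (-2)%R; 1%R]) SavGF n
     = poly_coefs [:: (-1)%R; 1%R; 1%R; (-1)%R] n.
Proof.
rewrite (conv_tp _ _ (ltnSn n)).
set A := tp n.+1 _; set S := tp n.+1 SavGF.
pose O := tp n.+1 oneMinusB; pose Q := tp n.+1 (poly_coefs [:: 1; -1; -1; 1]).
pose Bp := tp n.+1 Bcoef.
have hO : eqto n (O * S) 1.
  move=> k hk; rewrite -conv_tp ?part2 ?coef1; last by lia.
  by case: (k == 0%N).
have hW : eqto n (Q * Bp) (tp n.+1 (poly_coefs [:: 0; 1; 0; -1; 1])).
  by move=> k hk; rewrite -conv_tp ?part4 ?coef_poly; [rewrite ifT //; lia | lia].
have hA : eqto n A (Q * Bp - Q).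
  move=> k hk; rewrite coefB hW // /A /Q !coef_poly (_ : (k < n.+1)%N = true); last by lia.
  by case: k hk => [|[|[|[|[|k]]]]] _ //=; rewrite subr0.
have hO' : eqto n (1 - Bp) O.
  move=> k hk; rewrite coefB coef1 /O /Bp !coef_poly (_ : (k < n.+1)%N = true); last by lia.
  by rewrite /oneMinusB; case: (k == 0%N).
have e : (Q * Bp - Q) * S = - (Q * ((1 - Bp) * S)).
  ring.
have h1 := eqto_mul hA (fun k _ => erefl (S`_k)).
have h2 : eqto n ((1 - Bp) * S) 1.
  move=> k hk; rewrite (eqto_mul hO' (fun k _ => erefl (S`_k))) //; exact: hO.
have h3 := eqto_mul (fun k _ => erefl (Q`_k)) h2.
rewrite h1 // e coefN h3 // mulr1 /Q coef_poly ltnSn.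
case: n {A S O Q Bp hO hW hA hO' e h1 h2 h3} => [|[|[|[|n]]]] //=.
by rewrite /poly_coefs nth_nil oppr0.
Qed.

Theorem mainTheorem8 :
  (forall n : nat,
     conv (poly_coefs [:: (-1)%R; 2%R; 1%R; (-2)%R; 1%R]) SavGF n
     = poly_coefs [:: (-1)%R; 1%R; 1%R; (-1)%R] n)
  /\ (forall n : nat, conv oneMinusB SavGF n = Posz (n == 0%N))
  /\ (forall n : nat, Posz (Sav312_end1 n) = Bcoef n.+1)
  /\ (forall n : nat,
        conv (poly_coefs [:: 1%R; (-1)%R; (-1)%R; 1%R]) Bcoef n
        = poly_coefs [:: 0%R; 1%R; 0%R; (-1)%R; 1%R] n).
Proof.
split; first exact: part1.
split; first exact: part2.
split; first exact: part3.
exact: part4.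
Qed.
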